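(* Suppose the $L$-smoothness assumption holds and let $\{w_t\}$, $\{z_t\}$, $\{v_t\}$, $\{\hat D_t\}$ be generated by {\tt Scaled L-SVRG} with any step-size $\eta>0$. Then for every $t\ge0$, $$\mathbb{E}\left[\|v_t\|^2_{\hat D_t^{-1}}\right]\le3\,\mathbb{E}\left[\|\nabla P(w_t)\|^2_{\hat D_t^{-1}}\right]+\frac{6L^2}{\alpha}\mathbb{E}\left[\|w_t-z_t\|^2\right].$$
   Context: $P=\frac1n\sum_{i=1}^nf_i$ with $f_i:\mathbb{R}^d\to\mathbb{R}$. $L$-smoothness assumption: each $f_i$ and $P$ are twice differentiable with $L$-Lipschitz gradients. $\|x\|_D^2=x^TDx$. For $J\subseteq[n]$, $\nabla^2P_J(w)=\frac1{|J|}\sum_{j\in J}\nabla^2 f_j(w)$; $\odot$ is the Hadamard product; $\mathrm{diag}(x)$ is the diagonal matrix with the entries of $x$. Preconditioner (parameters $\alpha>0$, $\beta\in(0,1)$, $m\ge1$): $D_0=\frac1m\sum_{j=1}^m\mathrm{diag}(z'_j\odot\nabla^2P_{\mathcal{J}_j}(w_0)z'_j)$, $D_t=\beta D_{t-1}+(1-\beta)\mathrm{diag}(z'_t\odot\nabla^2P_{\mathcal{J}_t}(w_t)z'_t)$ for $t\ge1$, with independent Rademacher vectors $z'$ and random index sets $\mathcal{J}\subseteq[n]$, independent of the gradient samples; $\hat D_t$ diagonal with $(\hat D_t)_{ii}=\max\{\alpha,|(D_t)_{ii}|\}$. {\tt Scaled L-SVRG} (probability $p\in(0,1]$): $z_0=w_0$,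 $v_0=\nabla P(w_0)$; for $t\ge0$: $w_{t+1}=w_t-\eta\hat D_t^{-1}v_t$; $z_{t+1}=w_t$ with probability $p$ and $z_{t+1}=z_t$ with probability $1-p$; draw $i_{t+1}$ uniformly from $[n]$ independently; $v_{t+1}=\nabla f_{i_{t+1}}(w_{t+1})-\nabla f_{i_{t+1}}(z_{t+1})+\nabla P(z_{t+1})$; update $\hat D_{t+1}$. *)

(* Defs.v *)
From HB Require Import structures.
From mathcomp Require Import all_boot all_order all_algebra.
From mathcomp Require Import all_classical all_reals all_analysis.
Set Implicit Arguments. Unset Strict Implicit. Unset Printing Implicit Defensive.
Import Order.TTheory GRing.Theory Num.Theory.
Import numFieldNormedType.Exports.
Local Open Scope ring_scope.

Section ScaledLSVRG.
Variables (R : realType) (d n : nat).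

Definition vec := 'cV[R]_d.

Definition wnorm (D : 'M[R]_d) (x : vec) : R := ((x^T *m D *m x) 0 0).
Definition sqnorm (x : vec) : R := ((x^T *m x) 0 0).
Definition dotv (g h : vec) : R := ((g^T *m h) 0 0).

Definition is_grad_hess (f : vec -> R) (g : vec -> vec) (H : vec -> 'M[R]_d) :=
  forall x, differentiable f x /\ (forall h, 'd f x h = dotv (g x) h) /\
            differentiable g x /\ (forall h, 'd g x h = H x *m h).

Definition lipschitz_grad (L : R) (g : vec -> vec) :=
  forall x y, sqnorm (g x - g y) <= L ^+ 2 * sqnorm (x - y).

Definition Pavg (f : 'I_n -> vec -> R) (x : vec) : R :=
  n%:R^-1 * \sum_(i < n) f i x.
Definition gradP (g : 'I_n -> vec -> vec) (x : vec) : vec :=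
  n%:R^-1 *: \sum_(i < n) g i x.
Definition hessP (H : 'I_n -> vec -> 'M[R]_d) (x : vec) : 'M[R]_d :=
  n%:R^-1 *: \sum_(i < n) H i x.
Definition hessPJ (H : 'I_n -> vec -> 'M[R]_d) (J : {set 'I_n}) (x : vec)
  : 'M[R]_d := (#|J|%:R)^-1 *: \sum_(j in J) H j x.

Definition rad (b : {ffun 'I_d -> bool}) : vec :=
  \col_k (if b k then 1 else -1).

Definition hutch (A : 'M[R]_d) (z : vec) : 'M[R]_d :=
  diag_mx (\row_k (z k 0 * (A *m z) k 0)).

Definition Dhat (alpha : R) (D : 'M[R]_d) : 'M[R]_d :=
  diag_mx (\row_k (Num.max alpha `|D k k|)).

Record state := State { st_w : vec; st_z : vec; st_v : vec; st_D : 'M[R]_d }.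

(** Random outcome of one iteration t -> t+1:
    (coin for z_{t+1}, index i_{t+1}, Rademacher z'_{t+1}, index set J_{t+1}) *)
Definition step_out : finType :=
  (bool * 'I_n * {ffun 'I_d -> bool} * {set 'I_n})%type.
(** Random outcome of the initialization: the m pairs (z'_j, J_j) *)
Definition init_out (m : nat) : finType :=
  (m.-tuple ({ffun 'I_d -> bool} * {set 'I_n}))%type.

Variables (g : 'I_n -> vec -> vec) (H : 'I_n -> vec -> 'M[R]_d).
Variables (eta alpha beta : R) (m : nat) (w0 : vec).

Definition init_state (ini : init_out m) : state :=
  State w0 w0 (gradP g w0)
    (m%:R^-1 *: \sum_(x <- ini) hutch (hessPJ H x.2 w0) (rad x.1)).

Definition step (s : state) (o : step_out) : state :=
  let: (c, i, b, J) := o in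
  let w' := st_w s - eta *: (invmx (Dhat alpha (st_D s)) *m st_v s) in
  let z' := if c then st_w s else st_z s in
  let v' := g i w' - g i z' + gradP g z' in
  let D' := beta *: st_D s + (1 - beta) *: hutch (hessPJ H J w') (rad b) in
  State w' z' v' D'.

(** the state at time t = size os, given the random outcomes *)
Definition traj (ini : init_out m) (os : seq step_out) : state :=
  foldl step (init_state ini) os.

Variables (p : R) (q : {set 'I_n} -> R).

(** probability weights: coin ~ Bernoulli(p), i ~ Unif[n],
    z' ~ Unif{-1,1}^d, J ~ q *)
Definition rad_w : R := (2 ^ d)%:R^-1.
Definition init_w (ini : init_out m) : R :=
  \prod_(x <- ini) (rad_w * q x.2).
Definition step_w (o : step_out) : R :=
  let: (c, i, b, J) := o in
  (if c then p else 1 - p) * n%:R^-1 * rad_w * q J.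

Definition Exp (t : nat) (X : state -> R) : R :=
  \sum_(ini : init_out m) \sum_(os : t.-tuple step_out)
     (init_w ini * \prod_(o <- os) step_w o) * X (traj ini os).

End ScaledLSVRG.

(* Main.v *)
Require Import Defs.
From HB Require Import structures.
From mathcomp Require Import all_boot all_order all_algebra.
From mathcomp Require Import all_classical all_reals all_analysis.
From mathcomp Require Import ring lra.
Import Order.TTheory GRing.Theory Num.Theory.
Import numFieldNormedType.Exports.
Local Open Scope ring_scope.

Lemma wnorm_diag (R : realType) d (c : 'rV[R]_d) (x : vec R d) :
  wnorm (diag_mx c) x = \sum_k c 0 k * x k 0 ^+ 2.
Proof.
rewrite /wnorm mxE; apply: eq_bigr => k _.
rewrite mul_mx_diag !mxE expr2; lra.
Qed.

Lemma sqnorm_sum (R : realType) d (x : vec R d) :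
  sqnorm x = \sum_k x k 0 ^+ 2.
Proof.
rewrite /sqnorm mxE; apply: eq_bigr => k _; rewrite !mxE expr2 //.
Qed.

Lemma invmx_Dhat (R : realType) d (alpha : R) (D : 'M[R]_d) : 0 < alpha ->
  invmx (Dhat alpha D) = diag_mx (\row_k (Num.max alpha `|D k k|)^-1).
Proof.
move=> ha.
have pos k : 0 < Num.max alpha `|D k k| by rewrite lt_max ha.
have E : Dhat alpha D *m diag_mx (\row_k (Num.max alpha `|D k k|)^-1) = 1%:M.
  rewrite /Dhat mulmx_diag -diag_const_mx; congr diag_mx.
  apply/matrixP => i j; rewrite !mxE mulfV //; exact: lt0r_neq0.
have [U _] := mulmx1_unit E.
by rewrite -[RHS]mul1mx -(mulVmx U) -mulmxA E mulmx1.
Qed.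

Lemma coord_ineq (R : realType) (c ia a b e : R) : 0 < c -> c <= ia ->
  c * (a + b - e) ^+ 2 <= 3 * (c * a ^+ 2) + 3 * ia * b ^+ 2 + 3 * ia * e ^+ 2.
Proof.
move=> hc hci.
have h1 : (a + b - e) ^+ 2 <= 3 * (a ^+ 2 + b ^+ 2 + e ^+ 2).
  have : 0 <= (a - b) ^+ 2 + (a + e) ^+ 2 + (b + e) ^+ 2.
    by rewrite !addr_ge0 // sqr_ge0.
  move=> h; rewrite !expr2 in h *; nra.
have h2 : c * (a + b - e) ^+ 2 <= c * (3 * (a ^+ 2 + b ^+ 2 + e ^+ 2)).
  by rewrite ler_wpM2l // ltW.
have hb : c * b ^+ 2 <= ia * b ^+ 2 by rewrite ler_wpM2r // sqr_ge0.
have he : c * e ^+ 2 <= ia * e ^+ 2 by rewrite ler_wpM2r // sqr_ge0.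
nra.
Qed.

Lemma pointwise (R : realType) d n (g : 'I_n -> vec R d -> vec R d) (L alpha : R)
  (hLi : forall i, lipschitz_grad L (g i)) (hLP : lipschitz_grad L (gradP g))
  (ha : 0 < alpha) (Dm : 'M[R]_d) (w z : vec R d) (i : 'I_n) :
  wnorm (invmx (Dhat alpha Dm)) (g i w - g i z + gradP g z)
  <= 3 * wnorm (invmx (Dhat alpha Dm)) (gradP g w)
     + 6 * L ^+ 2 / alpha * sqnorm (w - z).
Proof.
rewrite invmx_Dhat // !wnorm_diag.
set a := gradP g w; set b := g i w - g i z; set e := gradP g w - gradP g z.
have hb := hLi i w z; have he := hLP w z.
rewrite -/b -/e !sqnorm_sum in hb he; rewrite sqnorm_sum.
have hv : forall k, (g i w - g i z + gradP g z) k 0 = a k 0 + b k 0 - e k 0.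
  move=> k; rewrite /b /e !mxE; lra.
apply: (@le_trans _ _ (\sum_k (3 * ((\row_k (Num.max alpha `|Dm k k|)^-1) 0 k * a k 0 ^+ 2)
     + 3 * alpha^-1 * b k 0 ^+ 2 + 3 * alpha^-1 * e k 0 ^+ 2))).
  apply: ler_sum => k _; rewrite hv; apply: coord_ineq.
    by rewrite mxE invr_gt0 lt_max ha.
  rewrite mxE ler_pV2 ?inE ?unitfE ?lt_max ?ha ?le_max ?lexx //.
    by rewrite lt0r_neq0 // lt_max ha.
  by rewrite lt0r_neq0.
rewrite !big_split /=.
set W := \sum_(k < d) (w - z) k 0 ^+ 2.
set A := \sum_(k < d) _ * a k 0 ^+ 2.
have -> : \sum_(i0 < d) 3 * ((\row_k (Num.max alpha `|Dm k k|)^-1) 0 i0 * a i0 0 ^+ 2) = 3 * A.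
  by rewrite mulr_sumr.
have -> : \sum_(i0 < d) 3 / alpha * b i0 0 ^+ 2 = 3 / alpha * \sum_k b k 0 ^+ 2.
  by rewrite mulr_sumr.
have -> : \sum_(i0 < d) 3 / alpha * e i0 0 ^+ 2 = 3 / alpha * \sum_k e k 0 ^+ 2.
  by rewrite mulr_sumr.
have ia : 0 < 3 / alpha by rewrite divr_gt0.
have h1 := ler_wpM2l (ltW ia) hb.
have h2 := ler_wpM2l (ltW ia) he.
have -> : 6 * L ^+ 2 / alpha * W = 3 / alpha * (L ^+ 2 * W) + 3 / alpha * (L ^+ 2 * W).
  rewrite /W; field; exact: lt0r_neq0.
rewrite -addrA lerD2l; exact: (lerD h1 h2).
Qed.

Theorem lemma6 (R : realType) (d n : nat) (hn : (0 < n)%N)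
  (f : 'I_n -> vec R d -> R) (g : 'I_n -> vec R d -> vec R d)
  (H : 'I_n -> vec R d -> 'M[R]_d) (L : R) (hL : 0 <= L)
  (hfi : forall i, is_grad_hess (f i) (g i) (H i))
  (hLi : forall i, lipschitz_grad L (g i))
  (hP : is_grad_hess (Pavg f) (gradP g) (hessP H))
  (hLP : lipschitz_grad L (gradP g))
  (alpha beta eta p : R) (m : nat) (w0 : vec R d)
  (halpha : 0 < alpha) (hbeta0 : 0 < beta) (hbeta1 : beta < 1)
  (hm : (0 < m)%N) (hp0 : 0 < p) (hp1 : p <= 1) (heta : 0 < eta)
  (q : {set 'I_n} -> R) (hq0 : forall J, 0 <= q J)
  (hq1 : \sum_(J : {set 'I_n}) q J = 1)
  (t : nat) :
  let E := Exp g H eta alpha beta m w0 p q t in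
  E (fun s => wnorm (invmx (Dhat alpha (st_D s))) (st_v s))
  <= 3 * E (fun s => wnorm (invmx (Dhat alpha (st_D s))) (gradP g (st_w s)))
     + 6 * L ^+ 2 / alpha * E (fun s => sqnorm (st_w s - st_z s)).
Proof.
cbv zeta.
have inv : forall ini os, exists i,
  st_v (traj g H eta alpha beta (m:=m) w0 ini os) =
  g i (st_w (traj g H eta alpha beta (m:=m) w0 ini os))
  - g i (st_z (traj g H eta alpha beta (m:=m) w0 ini os))
  + gradP g (st_z (traj g H eta alpha beta (m:=m) w0 ini os)).
  move=> ini os; rewrite /traj; case/lastP: os => [|os o].
    by exists (Ordinal hn); rewrite /= subrr add0r.
  rewrite foldl_rcons; case: o => [[[c i] b] J]; by exists i.
have rw : 0 <= rad_w R d by rewrite /rad_w invr_ge0 ler0n.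
rewrite /Exp !mulr_sumr -big_split /=; apply: ler_sum => ini _.
rewrite !mulr_sumr -big_split /=; apply: ler_sum => os _.
set K := 6 * L ^+ 2 / alpha.
rewrite mulrCA (mulrCA K) -mulrDr; apply: ler_wpM2l.
  apply: mulr_ge0; first by apply: prodr_ge0 => x _; rewrite mulr_ge0.
  apply: prodr_ge0 => -[[[c i] b] J] _ /=.
  rewrite !mulr_ge0 // ?invr_ge0 ?ler0n //; case: c => //; [exact: ltW | lra].
have [i ->] := inv ini os; exact: pointwise.
Qed.
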